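(* Let $S\subseteq\mathbb{R}^{n-1}$ and let $P\in\mathbb{R}[\mathbf{x};x_n]$ have degree $d_n$ in $x_n$, $P(\mathbf{x},x_n)=\sum_{k=0}^{d_n}c_k(\mathbf{x})x_n^k$. Suppose there exists $k\in\{0,\dots,d_n\}$ such that for all $\mathbf{x}\in S$: $c_{d_n-k}(\mathbf{x})\neq0$ and $c_{d_n-j}(\mathbf{x})=0$ for all integers $0\le j\le k-1$. Then $P$ is projectively delineable on $S$ if and only if $P$ is delineable on $S$.
   Context: Write $\mathbf{x}=(x_1,\dots,x_{n-1})$; for $\mathbf{x}_0\in\mathbb{R}^{n-1}$, $E_{\mathbf{x}_0}P$ is the univariate polynomial in $x_n$ obtained by substituting $\mathbf{x}_0$ for $\mathbf{x}$. $\mathbb{RP}^1$ is the quotient of $\mathbb{R}^2\setminus\{(0,0)\}$ by proportionality, with quotient topology; $(u:v)$ denotes the class of $(u,v)$; $\infty=(1:0)$. The homogenization of $P$ with respect to $d=\deg_{x_n}P$ is $H^{d}(P)(\mathbf{x},x_n,y)=\sum_kc_k(\mathbf{x})x_n^ky^{d-k}$. A projective root of a binary form $g(u,v)$ is $(u_0:v_0)$ with $g(u_0,v_0)=0$, and for $g\neq0$ its multiplicity is the largest $m$ with $(v_0u-u_0v)^m$ dividing $g$; projective roots of $E_{\mathbf{x}}P$ with respect to $d$ are those of $E_{\mathbf{x}}H^d(P)$. Define $Z_{\mathbb{R}}(P,S)=\{(\mathbf{x},x_n)\in S\times\mathbb{R}: P(\mathbf{x},x_n)=0\}$ and $Z_{\mathbb{RP}^1}(P,S)=\{(\mathbf{x},(x_n:y))\in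 S\times\mathbb{RP}^1: H^{d}(P)(\mathbf{x},x_n,y)=0\}$. $P$ is delineable on $S$ if there are $k\in\mathbb{N}$ and continuous $\theta_1,\dots,\theta_k:S\to\mathbb{R}$ with $Z_{\mathbb{R}}(P,S)$ equal to the disjoint union of the graphs of the $\theta_l$, and for each $l$ an $m_l\geq1$ such that for all $\mathbf{x}\in S$, $\theta_l(\mathbf{x})$ is a root of $E_{\mathbf{x}}P$ of multiplicity $m_l$. $P$ is projectively delineable on $S$ if there are $k\in\mathbb{N}$ and continuous $\theta_1,\dots,\theta_k:S\to\mathbb{RP}^1$ with $Z_{\mathbb{RP}^1}(P,S)$ equal to the disjoint union of the graphs of the $\theta_l$, and for each $l$ an $m_l\geq1$ such that for all $\mathbf{x}\in S$, $\theta_l(\mathbf{x})$ is a projective root of $E_{\mathbf{x}}P$ (with respect to $\deg_{x_n}P$) of multiplicity $m_l$; the $\theta_l$ are the projective root functions and their graphs the projective $P$-sections. *)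

(* Defs.v *)
From mathcomp Require Import all_boot all_order all_algebra.
From mathcomp Require Import mpoly.
From mathcomp Require Import reals.
Set Implicit Arguments. Unset Strict Implicit. Unset Printing Implicit Defensive.
Import Order.TTheory GRing.Theory Num.Theory.
Local Open Scope ring_scope.

(* Points of R^m are functions 'I_m -> R; here m = n-1.  A polynomial
   P in R[x; x_n] is an element of {poly {mpoly R[m]}}: univariate in x_n with
   coefficients c_k(x) = P`_k in R[x_1..x_m]. *)

Definition degn (R : realType) (m : nat) (P : {poly {mpoly R[m]}}) : nat :=
  (size P).-1.

Definition evalx (R : realType) (m : nat) (x : 'I_m -> R)
  (P : {poly {mpoly R[m]}}) : {poly R} :=
  map_poly (fun c : {mpoly R[m]} => c.@[x]) P.

Definition cont_on (R : realType) (m : nat) (S : ('I_m -> R) -> Prop)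
  (f : ('I_m -> R) -> R) : Prop :=
  forall x, S x -> forall eps : R, 0 < eps -> exists2 delta : R, 0 < delta &
    forall y, S y -> (forall i, `|y i - x i| < delta) -> `|f y - f x| < eps.

Definition root_mult (R : realType) (p : {poly R}) (t : R) (mu : nat) : Prop :=
  p != 0 /\ (('X - t%:P) ^+ mu %| p) /\ ~~ (('X - t%:P) ^+ mu.+1 %| p).

Definition delineable (R : realType) (m : nat) (P : {poly {mpoly R[m]}})
  (S : ('I_m -> R) -> Prop) : Prop :=
  exists (k : nat) (theta : 'I_k -> ('I_m -> R) -> R) (mu : 'I_k -> nat),
    [/\ (forall l, cont_on S (theta l)),
        (forall x, S x -> forall t : R,
            (evalx x P).[t] = 0 <-> exists l, theta l x = t),
        (forall x, S x -> forall l l', theta l x = theta l' x -> l = l') &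
        (forall l, (1 <= mu l)%N /\
           forall x, S x -> root_mult (evalx x P) (theta l x) (mu l))].

(* ---------- Projective line RP^1 ----------
   A point of RP^1 is represented by a nonzero pair (u, v); two pairs
   represent the same point iff they are proportional. *)
Definition nonzero2 (R : realType) (p : R * R) : Prop := p <> (0, 0).

Definition proj_eq (R : realType) (p q : R * R) : Prop :=
  p.1 * q.2 = p.2 * q.1.

Definition open_punct (R : realType) (U : R * R -> Prop) : Prop :=
  (forall p, U p -> nonzero2 p) /\
  forall p, U p -> exists2 eps : R, 0 < eps &
    forall q, nonzero2 q -> `|q.1 - p.1| < eps -> `|q.2 - p.2| < eps -> U q.

Definition saturated (R : realType) (U : R * R -> Prop) : Prop :=
  forall p q, nonzero2 q -> proj_eq p q -> U p -> U q.

(* Continuity of the map x |-> class of theta x, S -> RP^1 with the quotient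
   topology: the open sets of RP^1 correspond exactly to the saturated open
   subsets of R^2 \ {0}; we require their preimages to be open in S. *)
Definition proj_cont_on (R : realType) (m : nat) (S : ('I_m -> R) -> Prop)
  (theta : ('I_m -> R) -> R * R) : Prop :=
  forall U, open_punct U -> saturated U ->
  forall x, S x -> U (theta x) -> exists2 delta : R, 0 < delta &
    forall y, S y -> (forall i, `|y i - x i| < delta) -> U (theta y).

(* The binary form H^d(p)(u,v) = sum_k p_k u^k v^(d-k), as an element of R[u,v]
   ('X_0 = u, 'X_1 = v). *)
Definition homogH (R : realType) (d : nat) (p : {poly R}) : {mpoly R[2]} :=
  \sum_(k < d.+1) p`_k *: ('X_(0 : 'I_2) ^+ k * 'X_(1 : 'I_2) ^+ (d - k)).

Definition pt2 (R : realType) (p : R * R) : 'I_2 -> R :=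
  fun i => if val i == 0%N then p.1 else p.2.

Definition mpdvd (R : realType) (a b : {mpoly R[2]}) : Prop :=
  exists c : {mpoly R[2]}, b = c * a.

Definition proj_root_mult (R : realType) (g : {mpoly R[2]}) (p : R * R)
  (mu : nat) : Prop :=
  let L := p.2 *: 'X_(0 : 'I_2) - p.1 *: 'X_(1 : 'I_2) in
  g != 0 /\ mpdvd (L ^+ mu) g /\ ~ mpdvd (L ^+ mu.+1) g.

Definition proj_delineable (R : realType) (m : nat) (P : {poly {mpoly R[m]}})
  (S : ('I_m -> R) -> Prop) : Prop :=
  exists (k : nat) (theta : 'I_k -> ('I_m -> R) -> R * R) (mu : 'I_k -> nat),
    [/\ (forall l x, S x -> nonzero2 (theta l x)),
        (forall l, proj_cont_on S (theta l)),
        (forall x, S x -> forall q : R * R, nonzero2 q ->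
            ((homogH (degn P) (evalx x P)).@[pt2 q] = 0 <->
             exists l, proj_eq (theta l x) q)),
        (forall x, S x -> forall l l', proj_eq (theta l x) (theta l' x) -> l = l') &
        (forall l, (1 <= mu l)%N /\
           forall x, S x ->
             proj_root_mult (homogH (degn P) (evalx x P)) (theta l x) (mu l))].

(* Main.v *)
Require Import Defs.
From mathcomp Require Import all_boot all_order all_algebra all_fingroup.
From mathcomp Require Import mpoly.
From mathcomp Require Import reals ring lra zify.
From Stdlib Require Import Classical.
Import Order.TTheory GRing.Theory Num.Theory.
Local Open Scope ring_scope.
Set Implicit Arguments. Unset Strict Implicit.


Section Alg.
Variable R : realType.

Lemma mmapXU (S : comNzRingType) (f : {rmorphism R -> S}) (h : 'I_2 -> S) i :
  mmap f h ('X_i : {mpoly R[2]}) = h i.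
Proof. by rewrite mmapX mmap1U. Qed.

Lemma mmap_homogH (S : comNzRingType) (f : {rmorphism R -> S}) (h : 'I_2 -> S) d p :
  mmap f h (homogH d p) = \sum_(k < d.+1) f p`_k * (h 0 ^+ k * h 1 ^+ (d - k)).
Proof.
rewrite /homogH.
have -> : forall F : 'I_d.+1 -> {mpoly R[2]}, mmap f h (\sum_k F k) = \sum_k mmap f h (F k).
  by move=> F; rewrite raddf_sum.
apply: eq_bigr => k _.
by rewrite mmapZ (rmorphM (mmap f h)) !(rmorphXn (mmap f h)) /= !mmapXU.
Qed.
End Alg.



Section Alg.
Variable R : realType.

Definition hphi : 'I_2 -> {poly R} := fun i => if val i == 0%N then 'X else 1.

Lemma phiH d (p : {poly R}) : (size p <= d.+1)%N ->
  mmap (@polyC R) hphi (homogH d p) = p.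
Proof.
move=> sp; rewrite mmap_homogH /hphi /=.
under eq_bigr do rewrite expr1n mulr1 mul_polyC.
rewrite -poly_def; apply/polyP => i; rewrite coef_poly.
case: ltnP => // hi; rewrite nth_default //; exact: leq_trans hi.
Qed.

Lemma evH d (p : {poly R}) q :
  (homogH d p).@[pt2 q] = \sum_(k < d.+1) p`_k * (q.1 ^+ k * q.2 ^+ (d - k)).
Proof. exact: (mmap_homogH idfun). Qed.

End Alg.



Section Alg.
Variable R : realType.

Lemma ev_fin d (p : {poly R}) (q : R * R) : q.2 != 0 -> (size p <= d.+1)%N ->
  (homogH d p).@[pt2 q] = q.2 ^+ d * p.[q.1 / q.2].
Proof.
move=> q2 sp; rewrite evH (horner_coef_wide _ sp) mulr_sumr.
apply: eq_bigr => k _.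
have hk : (k <= d)%N by rewrite -ltnS.
rewrite expr_div_n; have -> : q.2 ^+ d = q.2 ^+ (d - k) * q.2 ^+ k by rewrite -exprD subnK.
by field; rewrite expf_neq0.
Qed.

Lemma ev_inf d (p : {poly R}) (a : R) :
  (homogH d p).@[pt2 (a, 0)] = p`_d * a ^+ d.
Proof.
rewrite evH big_ord_recr /= subnn expr0 mulr1 big1 ?add0r // => k _.
by rewrite expr0n subn_eq0 leqNgt ltn_ord /= !mulr0.
Qed.

End Alg.



Section Alg.
Variable R : realType.
Local Notation U := ('X_(0 : 'I_2) : {mpoly R[2]}).
Local Notation V := ('X_(1 : 'I_2) : {mpoly R[2]}).

Lemma HV e (q : {poly R}) : (size q <= e.+1)%N ->
  homogH e.+1 q = homogH e q * V.
Proof.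
move=> sq; rewrite /homogH big_ord_recr /= [q`_e.+1]nth_default // scale0r addr0.
rewrite mulr_suml; apply: eq_bigr => k _ /=.
have hk : (k <= e)%N by rewrite -ltnS.
by rewrite -scalerAl subSn // exprSr mulrA.
Qed.

Lemma HX e (q : {poly R}) (t : R) : (size q <= e.+1)%N ->
  homogH e.+1 (q * ('X - t%:P)) = homogH e q * (U - t *: V).
Proof.
move=> sq; rewrite /homogH.
under eq_bigr do rewrite mulrBr coefB coefMX coefMC scalerBl.
rewrite sumrB mulrBr !mulr_suml.
congr (_ - _).
  rewrite big_ord_recl /= scale0r add0r; apply: eq_bigr => i _ /=.
  rewrite /bump /= add1n subSS -scalerAl exprS add0n; congr (_ *: _); ring.
rewrite (big_ord_recr e.+1) /= [q`_e.+1]nth_default // mul0r scale0r addr0.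
apply: eq_bigr => i _ /=.
have hk : (i <= e)%N by rewrite -ltnS.
rewrite -scalerAr -scalerAl scalerA subSn // exprSr.
by rewrite [t * _]mulrC mulrA.
Qed.

End Alg.



Section Alg.
Variable R : realType.
Local Notation U := ('X_(0 : 'I_2) : {mpoly R[2]}).
Local Notation V := ('X_(1 : 'I_2) : {mpoly R[2]}).

Lemma HXn e n (q : {poly R}) (t : R) : (size q <= e.+1)%N ->
  homogH (e + n) (q * ('X - t%:P) ^+ n) = homogH e q * (U - t *: V) ^+ n.
Proof.
move=> sq; elim: n => [|n IH]; first by rewrite addn0 !expr0 !mulr1.
rewrite addnS !exprSr !mulrA HX ?IH //.
apply: leq_trans (size_polyMleq _ _) _.
by rewrite size_exp_XsubC addnS /= -addSn leq_add2r.
Qed.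

Lemma HVn e n (q : {poly R}) : (size q <= e.+1)%N ->
  homogH (e + n) q = homogH e q * V ^+ n.
Proof.
move=> sq; elim: n => [|n IH]; first by rewrite addn0 expr0 mulr1.
rewrite addnS HV ?IH ?exprSr ?mulrA //.
by apply: leq_trans sq _; rewrite ltnS leq_addr.
Qed.

Lemma phiL (a b : R) :
  mmap (@polyC R) (@hphi R) (b *: U - a *: V) = b%:P * 'X - a%:P.
Proof.
rewrite mmapB !mmapZ /= !mmapXU /hphi /=.
by rewrite mulr1.
Qed.

Lemma homogH_neq0 d (p : {poly R}) : p != 0 -> (size p <= d.+1)%N ->
  homogH d p != 0.
Proof.
move=> p0 sp; apply: contra p0 => /eqP h0.
by rewrite -(phiH sp) h0 (rmorph0 (mmap (@polyC R) (@hphi R))).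
Qed.

Lemma dvd_fin d (p : {poly R}) (a b : R) mu : b != 0 -> p != 0 ->
  (size p <= d.+1)%N ->
  (('X - (a / b)%:P) ^+ mu %| p) <-> mpdvd ((b *: U - a *: V) ^+ mu) (homogH d p).
Proof.
move=> b0 p0 sp; split.
  move=> hd; have := hd; case/dvdpP => q0 Hq.
  have q00 : q0 != 0 by apply: contra p0 => /eqP q0e; rewrite Hq q0e mul0r.
  have hs := dvdp_leq p0 hd; rewrite size_exp_XsubC in hs.
  have smu : (mu <= d)%N by rewrite -ltnS (leq_trans hs sp).
  have sq : (size q0 <= (d - mu).+1)%N.
    move: sp; rewrite Hq size_Mmonic ?monic_exp ?monicXsubC // size_exp_XsubC.
    rewrite addnS /= => h; rewrite -subSn // leq_subRL; [by rewrite addnC | exact: leqW].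
  exists (b ^- mu *: homogH (d - mu) q0).
  rewrite -{1}(subnK smu) Hq HXn //.
  have -> : b *: U - a *: V = b *: (U - (a / b) *: V).
    by rewrite scalerBr scalerA mulrC divfK.
  rewrite exprZn -scalerAl -scalerAr scalerA mulVf ?scale1r //.
  by rewrite expf_neq0.
case=> c Hc.
have := f_equal (mmap (@polyC R) (@hphi R)) Hc.
have e1 : forall x y : {mpoly R[2]}, mmap (@polyC R) (@hphi R) (x * y ^+ mu) =
   mmap (@polyC R) (@hphi R) x * (mmap (@polyC R) (@hphi R) y) ^+ mu.
  by move=> x y; rewrite rmorphM rmorphXn.
rewrite phiH // e1 phiL => ->.
have -> : b%:P * 'X - a%:P = b%:P * ('X - (a / b)%:P) :> {poly R}.
  by rewrite mulrBr -polyCM mulrC mulrCA divff // mulr1 mulrC.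
by rewrite exprMn mulrA dvdp_mull.
Qed.

End Alg.



Section Alg.
Variable R : realType.
Local Notation U := ('X_(0 : 'I_2) : {mpoly R[2]}).
Local Notation V := ('X_(1 : 'I_2) : {mpoly R[2]}).

Lemma homogH0 d : homogH d (0 : {poly R}) = 0.
Proof. by rewrite /homogH big1 // => k _; rewrite coef0 scale0r. Qed.

Lemma rm_equiv d (p : {poly R}) (a b : R) mu : b != 0 -> (size p <= d.+1)%N ->
  root_mult p (a / b) mu <-> proj_root_mult (homogH d p) (a, b) mu.
Proof.
move=> b0 sp; rewrite /root_mult /proj_root_mult /=; split.
  case=> p0 [h1 h2]; split; first exact: homogH_neq0.
  split; first by apply/(@dvd_fin R d p a b mu b0 p0 sp).
  by move=> /(@dvd_fin R d p a b mu.+1 b0 p0 sp) h3; rewrite h3 in h2.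
case=> g0 [h1 h2].
have p0 : p != 0 by apply: contra g0 => /eqP ->; rewrite homogH0.
split=> //; split; first by apply/(@dvd_fin R d p a b mu b0 p0 sp).
by apply/negP => /(@dvd_fin R d p a b mu.+1 b0 p0 sp).
Qed.

Lemma VXn_neq0 k : V ^+ k != 0.
Proof.
apply: expf_neq0; apply/eqP => h.
have := mevalXU (pt2 ((0 : R), (1 : R))) (1 : 'I_2).
by rewrite h meval0 /pt2 /= => /eqP; rewrite eq_sym oner_eq0.
Qed.

Lemma inf_mult d k (p : {poly R}) (a : R) : a != 0 -> (k <= d)%N ->
  (size p <= (d - k).+1)%N -> p`_(d - k) != 0 ->
  proj_root_mult (homogH d p) (a, 0) k.
Proof.
move=> a0 kd sp pk; rewrite /proj_root_mult /=.
have p0 : p != 0 by apply: contra pk => /eqP ->; rewrite coef0.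
have sp' : (size p <= d.+1)%N by apply: leq_trans sp _; rewrite ltnS leq_subr.
have HE : homogH d p = homogH (d - k) p * V ^+ k by rewrite -HVn // subnK.
have LE : 0 *: U - a *: V = (- a) *: V by rewrite scale0r sub0r scaleNr.
rewrite LE; split; first exact: homogH_neq0.
split.
  exists ((- a) ^- k *: homogH (d - k) p).
  rewrite HE exprZn -scalerAl -scalerAr scalerA mulVf ?scale1r //.
  by rewrite expf_neq0 // oppr_eq0.
case=> c Hc.
have : homogH (d - k) p = ((- a) ^+ k.+1 *: c) * V.
  apply: (mulIf (VXn_neq0 k)); rewrite -HE Hc exprZn exprSr.
  by rewrite -scalerAl -scalerAr -scalerAl -mulrA -exprS.
move/(f_equal (meval (pt2 ((1 : R), (0 : R))))).
rewrite ev_inf mevalM mevalXU /pt2 /= mulr0 expr1n mulr1.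
by move/eqP; rewrite (negbTE pk).
Qed.

Lemma mpdvd_le (g L : {mpoly R[2]}) i j : (j <= i)%N -> mpdvd (L ^+ i) g -> mpdvd (L ^+ j) g.
Proof.
move=> ji [c ->]; exists (c * L ^+ (i - j)).
by rewrite -mulrA -exprD subnK.
Qed.

Lemma mult_uniq (g L : {mpoly R[2]}) i j :
  mpdvd (L ^+ i) g -> ~ mpdvd (L ^+ i.+1) g ->
  mpdvd (L ^+ j) g -> ~ mpdvd (L ^+ j.+1) g -> i = j.
Proof.
move=> hi ni hj nj; case: (ltngtP i j) => // h.
  by case: ni; apply: mpdvd_le hj.
by case: nj; apply: mpdvd_le hi.
Qed.

End Alg.



Section Top.
Variables (R : realType) (m : nat) (S : ('I_m -> R) -> Prop).

Definition near (x : 'I_m -> R) (A : ('I_m -> R) -> Prop) :=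
  exists2 d : R, 0 < d & forall y, S y -> (forall i, `|y i - x i| < d) -> A y.

Lemma near_and x A B : near x A -> near x B -> near x (fun y => A y /\ B y).
Proof.
case=> d1 d10 h1 [d2 d20 h2]; exists (Num.min d1 d2); first by rewrite lt_min d10.
move=> y Sy hy; split; [apply: h1 | apply: h2] => // i; have := hy i;
  rewrite lt_min => /andP[].
  by [].
by [].
Qed.

Lemma near_impl x (A B : ('I_m -> R) -> Prop) : (forall y, S y -> A y -> B y) ->
  near x A -> near x B.
Proof. by move=> hAB [d d0 h]; exists d => // y Sy hy; apply: hAB => //; apply: h. Qed.

Lemma near_true x (A : ('I_m -> R) -> Prop) : (forall y, A y) -> near x A.
Proof. by move=> hA; exists 1 => //. Qed.

Lemma near_all K x (A : 'I_K -> ('I_m -> R) -> Prop) :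
  (forall l, near x (A l)) -> near x (fun y => forall l, A l y).
Proof.
move=> hA.
suff : forall n, near x (fun y => forall l : 'I_K, (l < n)%N -> A l y).
  move=> /(_ K); apply: near_impl => y _ h l; exact: h.
elim=> [|n IH]; first by apply: near_true.
case: (ltnP n K) => hn.
  apply: near_impl (near_and IH (hA (Ordinal hn))) => y _ [h1 h2] l.
  rewrite ltnS leq_eqVlt => /orP[/eqP e|]; last exact: h1.
  by have -> : l = Ordinal hn by apply: val_inj.
apply: near_impl IH => y _ h l _; apply: h; exact: leq_trans (ltn_ord l) hn.
Qed.

Lemma cont_proj f : cont_on S f -> proj_cont_on S (fun x => (f x, 1)).
Proof.
move=> cf U [_ hU] _ x Sx Ux.
have [e e0 he] := hU _ Ux.
have [d d0 hd] := cf x Sx e e0.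
exists d => // y Sy hy; apply: he => /=.
- by move=> [] _ /eqP; rewrite oner_eq0.
- exact: hd.
- by rewrite subrr normr0.
Qed.

Lemma const_proj (c : R * R) : proj_cont_on S (fun _ => c).
Proof. by move=> U _ _ x _ Ux; exists 1. Qed.

Lemma sat_v (p q : R * R) : nonzero2 q -> proj_eq p q -> p.2 != 0 -> q.2 != 0.
Proof.
rewrite /nonzero2 /proj_eq; case: p q => a b [u v] /= nz e b0.
apply/eqP => v0; apply: nz; move: e; rewrite v0 mulr0 => /esym/eqP.
by rewrite mulf_eq0 (negbTE b0) /= => /eqP ->.
Qed.

Lemma near_v th x : proj_cont_on S th -> S x -> (th x).2 != 0 ->
  near x (fun y => (th y).2 != 0).
Proof.
move=> cth Sx hx.
pose U := fun q : R * R => q.2 != 0.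
have opU : open_punct U.
  split => [[u v] /= v0 | p p0].
    by rewrite /nonzero2 => -[_ e]; rewrite /U e eqxx in v0.
  exists `|p.2|; first by rewrite normr_gt0.
  move=> q _ _ h2; apply/eqP => q0; move: h2; rewrite q0 sub0r normrN ltxx //.
have satU : saturated U by move=> p q nq e; exact: sat_v.
have [d d0 h] := cth U opU satU x Sx hx.
by exists d.
Qed.

Lemma near_conv th x (eps : R) : proj_cont_on S th -> S x -> (th x).2 != 0 ->
  0 < eps ->
  near x (fun y => (th y).2 != 0 /\
     `|(th y).1 / (th y).2 - (th x).1 / (th x).2| < eps).
Proof.
move=> cth Sx hx e0.
set t0 := (th x).1 / (th x).2.
pose U := fun q : R * R => 0 < eps * `|q.2| - `|q.1 - t0 * q.2|.
have Uv : forall q, U q -> q.2 != 0.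
  move=> [u v] /=; rewrite /U /= => h; apply/eqP => v0; move: h.
  rewrite v0 normr0 mulr0 sub0r oppr_gt0 => h.
  by have := normr_ge0 (u - t0 * 0); rewrite leNgt h.
have opU : open_punct U.
  split; first by move=> p /Uv pv pe; rewrite pe /= eqxx in pv.
  move=> p Up; set c := eps * `|p.2| - `|p.1 - t0 * p.2|.
  have K0 : 0 < 1 + eps + `|t0| by rewrite ltr_wpDr // addr_gt0.
  exists (c / (2 * (1 + eps + `|t0|))).
    by apply: divr_gt0 => //; rewrite mulr_gt0.
  move=> q _ h1 h2; rewrite /U.
  set dl := c / (2 * (1 + eps + `|t0|)).
  have hdl : dl + eps * dl + `|t0| * dl = c / 2.
    by rewrite /dl; field; rewrite lt0r_neq0.
  have n1 : `|q.1 - t0 * q.2| <= `|p.1 - t0 * p.2| + `|q.1 - p.1| + `|t0| * `|q.2 - p.2|.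
    have -> : q.1 - t0 * q.2 = (p.1 - t0 * p.2) + (q.1 - p.1) - t0 * (q.2 - p.2) by ring.
    apply: le_trans (ler_normB _ _) _; rewrite normrM lerD2r.
    exact: ler_normD.
  have n2 : `|p.2| <= `|q.2| + `|q.2 - p.2|.
    have e : q.2 - (q.2 - p.2) = p.2 by ring.
    by have := ler_normB q.2 (q.2 - p.2); rewrite e.
  have n3 : eps * `|p.2| <= eps * `|q.2| + eps * `|q.2 - p.2|.
    by rewrite -mulrDr ler_wpM2l // ltW.
  have n4 : eps * `|q.2 - p.2| <= eps * dl by rewrite ler_wpM2l // ltW.
  have n5 : `|t0| * `|q.2 - p.2| <= `|t0| * dl by rewrite ler_wpM2l // ltW.
  have c0 : 0 < c by [].
  rewrite /c in hdl c0.
  have h1' : `|q.1 - p.1| < dl by [].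
  clearbody dl; lra.
have satU : saturated U.
  move=> p q nq e Up; have pv := Uv _ Up.
  have qv : q.2 != 0 by exact: sat_v nq e pv.
  move: Up; rewrite /U /proj_eq in e *.
  have e1 : eps * `|q.2| - `|q.1 - t0 * q.2| =
      `|q.2 / p.2| * (eps * `|p.2| - `|p.1 - t0 * p.2|).
    rewrite mulrBr; congr (_ - _).
      rewrite normf_div; field; by rewrite normr_eq0.
    rewrite -normrM; congr `|_|.
    have -> : q.1 = p.1 * q.2 / p.2 by rewrite e mulrC mulrA mulVf ?mul1r.
    by field.
  rewrite e1 => h; apply: mulr_gt0 => //.
  by rewrite normr_gt0 mulf_neq0 // invr_eq0.
have Ux : U (th x).
  rewrite /U /t0 divfK // subrr normr0 subr0; by rewrite mulr_gt0 // normr_gt0.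
have [d d0 h] := cth U opU satU x Sx Ux.
  exists d => // y Sy hy; have Uy := h y Sy hy.
  have yv := Uv _ Uy; split => //.
  move: Uy; rewrite /U subr_gt0.
  have -> : (th y).1 / (th y).2 - t0 = ((th y).1 - t0 * (th y).2) / (th y).2.
    by field.
  by rewrite normf_div ltr_pdivrMr ?normr_gt0 // mulrC.
Qed.

End Top.



Lemma cross (R : realType) (a b a' b' : R) : b != 0 -> b' != 0 ->
  a / b = a' / b' -> a * b' = b * a'.
Proof.
move=> b0 b0' e.
have -> : a = a' / b' * b by rewrite -e divfK.
by field.
Qed.

Unset Implicit Arguments.

Theorem mainTheorem5 (R : realType) (m : nat) (S : ('I_m -> R) -> Prop)
  (P : {poly {mpoly R[m]}}) :
  (exists2 k : nat, (k <= degn P)%N &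
     forall x, S x ->
       (P`_(degn P - k)).@[x] != 0 /\
       (forall j : nat, (j < k)%N -> (P`_(degn P - j)).@[x] = 0)) ->
  (proj_delineable P S <-> delineable P S).
Proof.
case=> k0 hk0 Hk.
have coefE x i : (evalx x P)`_i = (P`_i).@[x].
  by rewrite /evalx coef_map_id0 // meval0.
have sz x : (size (evalx x P) <= (degn P).+1)%N.
  by rewrite /evalx map_polyE (leq_trans (size_Poly _)) // size_map leqSpred.
have szk x : S x -> (size (evalx x P) <= (degn P - k0).+1)%N.
  move=> Sx; apply/leq_sizeP => j hj; rewrite coefE.
  case: (leqP j (degn P)) => hjd.
    have -> : j = (degn P - (degn P - j))%N by rewrite subKn.
    by apply: (Hk x Sx).2; lia.
  by rewrite nth_default ?meval0 //; exact: leq_trans (leqSpred _) hjd.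
have ck x : S x -> (evalx x P)`_(degn P - k0) != 0.
  by move=> Sx; rewrite coefE; exact: (Hk x Sx).1.
have cd0 x : S x -> (0 < k0)%N -> (evalx x P)`_(degn P) = 0.
  by move=> Sx k0p; rewrite coefE -[degn P]subn0; exact: (Hk x Sx).2.
have cd1 x : S x -> k0 = 0%N -> (evalx x P)`_(degn P) != 0.
  by move=> Sx k00; have := ck x Sx; rewrite k00 subn0.
have zf x (q : R * R) : q.2 != 0 ->
   ((homogH (degn P) (evalx x P)).@[pt2 q] = 0 <-> (evalx x P).[q.1 / q.2] = 0).
  move=> q2; rewrite ev_fin //; split; last by move=> ->; rewrite mulr0.
  by move/eqP; rewrite mulf_eq0 expf_eq0 (negbTE q2) andbF /= => /eqP.
have zi x (a : R) : a != 0 ->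
   ((homogH (degn P) (evalx x P)).@[pt2 (a, 0)] = 0 <-> (evalx x P)`_(degn P) = 0).
  move=> a0; rewrite ev_inf; split; last by move=> ->; rewrite mul0r.
  by move/eqP; rewrite mulf_eq0 expf_eq0 (negbTE a0) andbF orbF => /eqP.
have rmq x (q : R * R) mu : q.2 != 0 ->
   (root_mult (evalx x P) (q.1 / q.2) mu <->
    proj_root_mult (homogH (degn P) (evalx x P)) q mu).
  by case: q => a b /= b0; apply: rm_equiv.
have nz1 (t : R) : nonzero2 (t, 1).
  by move=> [] _ /eqP; rewrite oner_eq0.
have nz10 : nonzero2 ((1 : R), (0 : R)).
  by move=> [] /eqP; rewrite oner_eq0.
split.
- case=> K [th [mu [hnz hct hz hdj hmu]]].
  have root_th l x : S x -> (homogH (degn P) (evalx x P)).@[pt2 (th l x)] = 0.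
    move=> Sx; apply/(hz x Sx (th l x) (hnz l x Sx)); exists l.
    by rewrite /proj_eq mulrC.
  have th1 l x : S x -> (th l x).2 = 0 -> (th l x).1 != 0.
    move=> Sx e2; apply/eqP => e1; apply: (hnz l x Sx).
    by rewrite [th l x]surjective_pairing e1 e2.
  have projE l x (t : R) : S x -> (th l x).2 != 0 ->
      (proj_eq (th l x) (t, 1) <-> (th l x).1 / (th l x).2 = t).
    move=> Sx b0; rewrite /proj_eq /= mulr1; split => [->|<-]; last by rewrite mulrC divfK.
    by rewrite mulrC mulrA mulVf ?mul1r.
  have projD l l' x : S x -> (th l x).2 != 0 -> (th l' x).2 != 0 ->
      (th l x).1 / (th l x).2 = (th l' x).1 / (th l' x).2 -> l = l'.
    move=> Sx b0 b0' e; apply: (hdj x Sx); rewrite /proj_eq; exact: cross.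
  case: (posnP k0) => [k00 | k0pos].
  + have fin l x : S x -> (th l x).2 != 0.
      move=> Sx; apply/eqP => e; have := root_th l x Sx.
      rewrite [th l x]surjective_pairing e (zi x _ (th1 l x Sx e)) => h.
      by have := cd1 x Sx k00; rewrite h eqxx.
    exists K, (fun l x => (th l x).1 / (th l x).2), mu; split.
    * move=> l x Sx eps e0.
      have [dl dl0 h] := near_conv (hct l) Sx (fin l x Sx) e0.
      by exists dl => // y Sy hy; case: (h y Sy hy).
    * move=> x Sx t; have := zf x (t, 1) (oner_neq0 _); rewrite /= divr1 => <-.
      rewrite (hz x Sx (t, 1) (nz1 t)); split; case=> l hl; exists l.
        by apply/(projE l x t Sx (fin l x Sx)).
      by apply/(projE l x t Sx (fin l x Sx)).
    * move=> x Sx l l' e; exact: projD Sx (fin l x Sx) (fin l' x Sx) e.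
    * move=> l; have [h1 h2] := hmu l; split => // x Sx.
      by apply/(rmq x (th l x) (mu l) (fin l x Sx)); exact: h2.
  + case: (classic (exists x0, S x0)) => [[x0 Sx0] | nS]; last first.
      exists 0%N, (fun _ _ => 0), (fun _ => 1%N); split.
      - by move=> l x Sx; case: nS; exists x.
      - by move=> x Sx; case: nS; exists x.
      - by move=> x Sx; case: nS; exists x.
      - by case.
    have inf_ex x : S x -> exists l, (th l x).2 = 0.
      move=> Sx; have : (homogH (degn P) (evalx x P)).@[pt2 (1, 0)] = 0.
        by apply/(zi x 1 (oner_neq0 _)); exact: cd0.
      move/(hz x Sx _ nz10) => [l]; rewrite /proj_eq /= mulr0 mulr1 => e.
      by exists l.
    have inf_un x l l' : S x -> (th l x).2 = 0 -> (th l' x).2 = 0 -> l = l'.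
      by move=> Sx e e'; apply: (hdj x Sx); rewrite /proj_eq e e' mulr0 mul0r.
    have [i0 hi0] := inf_ex x0 Sx0.
    pose ix x := odflt i0 [pick l | (th l x).2 == 0].
    have ixP x : S x -> (th (ix x) x).2 = 0.
      move=> Sx; rewrite /ix; case: pickP => [l /eqP //|hn].
      by have [l hl] := inf_ex x Sx; have := hn l; rewrite hl eqxx.
    have fin x l : S x -> l != ix x -> (th l x).2 != 0.
      move=> Sx ne; apply/eqP => e; move/eqP: ne; apply.
      exact: inf_un Sx e (ixP x Sx).
    have muix x : S x -> mu (ix x) = k0.
      move=> Sx; have [_ h] := hmu (ix x); have := h x Sx.
      have a0 := th1 _ _ Sx (ixP x Sx).
      have -> : th (ix x) x = ((th (ix x) x).1, 0) by rewrite [th _ x]surjective_pairing /= ixP.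
      have := inf_mult a0 hk0 (szk x Sx) (ck x Sx).
      rewrite /proj_root_mult /= => -[_ [d1 n1]] [_ [d2 n2]].
      exact: mult_uniq d2 n2 d1 n1.
    have ix0 : ix x0 = i0 by apply: inf_un Sx0 (ixP x0 Sx0) hi0.
    have ixloc x : S x -> near S x (fun y => ix y = ix x).
      move=> Sx.
      have hall := @near_all _ _ S K x (fun l y => l != ix x -> (th l y).2 != 0).
      apply: near_impl (hall _).
        move=> y Sy h; apply/eqP/negPn/negP => ne.
        by have := h _ ne; rewrite ixP // eqxx.
      move=> l; case: (eqVneq l (ix x)) => [-> | ne].
        by apply: near_true.
      apply: near_impl (near_v (hct l) Sx (fin x l Sx ne)) => y _ h _; exact: h.
    pose tau x := tperm i0 (ix x).
    have tau_ne x j : tau x (lift i0 j) != ix x.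
      apply/eqP => e; have : tau x (lift i0 j) = tau x i0 by rewrite e /tau tpermL.
      move/perm_inj => e2; by have := neq_lift i0 j; rewrite e2 eqxx.
    pose g (j : 'I_K.-1) x := (th (tau x (lift i0 j)) x).1 / (th (tau x (lift i0 j)) x).2.
    exists K.-1, g, (fun j => mu (lift i0 j)); split.
    * move=> j x Sx eps e0.
      have [dl dl0 h] := near_and (ixloc x Sx)
        (near_conv (hct (tau x (lift i0 j))) Sx (fin x _ Sx (tau_ne x j)) e0).
      exists dl => // y Sy hy; have [e1 [_ e2]] := h y Sy hy.
      by rewrite /g /tau e1; exact: e2.
    * move=> x Sx t; have := zf x (t, 1) (oner_neq0 _); rewrite /= divr1 => <-.
      rewrite (hz x Sx (t, 1) (nz1 t)); split.
        case=> l hl.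
        have l_ne : l != ix x.
          apply/eqP => e; move: hl; rewrite /proj_eq /= e ixP // mul0r mulr1 => e1.
          by have := th1 _ _ Sx (ixP x Sx); rewrite e1 eqxx.
        have l0ne : i0 != tau x l.
          apply/eqP => e; move/eqP: l_ne; apply.
          by rewrite -(tpermK i0 (ix x) l) -/(tau x) -e /tau tpermL.
        have [j ej _] := unlift_some l0ne; exists j.
        rewrite /g -ej /tau tpermK.
        by apply/(projE l x t Sx (fin x l Sx l_ne)).
      case=> j <-; exists (tau x (lift i0 j)).
      by apply/(projE _ x _ Sx (fin x _ Sx (tau_ne x j))).
    * move=> x Sx j j' e.
      have := projD _ _ x Sx (fin x _ Sx (tau_ne x j)) (fin x _ Sx (tau_ne x j')) e.
      by move/perm_inj/lift_inj.
    * move=> j; have [h1 _] := hmu (lift i0 j); split => // x Sx.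
      have e : mu (tau x (lift i0 j)) = mu (lift i0 j).
        rewrite /tau; case: tpermP => [h|h|_ _] //.
          by have := neq_lift i0 j; rewrite h eqxx.
        by rewrite h muix // -ix0 muix.
      rewrite -e; apply/(rmq x _ _ (fin x _ Sx (tau_ne x j))).
      exact: (hmu _).2 x Sx.
- case=> K [th [mu [hct hz hdj hmu]]].
  case: (posnP k0) => [k00 | k0pos].
  + exists K, (fun l x => (th l x, 1)), mu; split.
    * by move=> l x _.
    * by move=> l; apply: cont_proj.
    * move=> x Sx [u v] nz /=; case: (eqVneq v 0) => [v0 | v0].
        subst v; have u0 : u != 0 by apply/eqP => u0; apply: nz; rewrite u0.
        rewrite (zi x u u0); split; first by move=> h; have := cd1 x Sx k00; rewrite h eqxx.
        case=> l; rewrite /proj_eq /= mulr0 mul1r => /esym/eqP.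
        by rewrite (negbTE u0).
      rewrite (zf x (u, v) v0) /= hz //; split; case=> l hl; exists l; rewrite /proj_eq /=.
        by rewrite hl mul1r divfK.
      by move: hl; rewrite /proj_eq /= mul1r => <-; rewrite mulfK.
    * move=> x Sx l l'; rewrite /proj_eq /= mulr1 mul1r => e; exact: hdj x Sx l l' e.
    * move=> l; have [h1 h2] := hmu l; split => // x Sx.
      by apply/(rmq x (th l x, 1) (mu l) (oner_neq0 _)); rewrite /= divr1; exact: h2.
  + pose th' (l : 'I_K.+1) x := if unlift ord_max l is Some j then (th j x, 1) else ((1 : R), (0 : R)).
    pose mu' (l : 'I_K.+1) := if unlift ord_max l is Some j then mu j else k0.
    exists K.+1, th', mu'; split.
    * by move=> l x _; rewrite /th'; case: unliftP.
    * by move=> l; rewrite /th'; case: unliftP => [j _|_]; [apply: cont_proj | apply: const_proj].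
    * move=> x Sx [u v] nz /=; case: (eqVneq v 0) => [v0 | v0].
        subst v; have u0 : u != 0 by apply/eqP => u0; apply: nz; rewrite u0.
        rewrite (zi x u u0); split => _; last exact: cd0.
        by exists ord_max; rewrite /th' unlift_none /proj_eq /= mulr0 mul0r.
      rewrite (zf x (u, v) v0) /= hz //; split.
        case=> j hj; exists (lift ord_max j); rewrite /th' liftK /proj_eq /=.
        by rewrite hj mul1r divfK.
      case=> l; rewrite /th'; case: unliftP => [j _ | _]; rewrite /proj_eq /=.
        by rewrite mul1r => hl; exists j; rewrite -hl mulfK.
      by rewrite mul1r mul0r => e; rewrite e eqxx in v0.
    * move=> x Sx l l'; rewrite /th'.
      case: unliftP => [j -> | ->]; case: unliftP => [j' -> | ->]; rewrite /proj_eq /= //.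
      - by rewrite mulr1 mul1r => e; rewrite (hdj x Sx j j' e).
      - by rewrite mulr0 mulr1 => /eqP; rewrite eq_sym oner_eq0.
      - by rewrite mulr1 mul0r => /eqP; rewrite oner_eq0.
    * move=> l; rewrite /mu' /th'; case: unliftP => [j _ | _].
        have [h1 h2] := hmu j; split => // x Sx.
        by apply/(rmq x (th j x, 1) (mu j) (oner_neq0 _)); rewrite /= divr1; exact: h2.
      split => // x Sx.
      exact: inf_mult (oner_neq0 _) hk0 (szk x Sx) (ck x Sx).
Qed.
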